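(* Let $\mathsf{k}$ be a field, $n\ge2$, $R=\mathsf{k}[x_1,\dots,x_r]$, $S=R[t]$, $A=\mathsf{k}[t]/(t^n)$, $F_B\in Q_R$ homogeneous of degree $j_B$, $I_B=\operatorname{Ann}_R(F_B)$, $B=R/I_B$. Let $G\in Q_R$ be homogeneous of degree $j_B+n-1$ and $F=T^{[n-1]}F_B+G\in Q_S$. Then $C=S/\operatorname{Ann}_S(F)$ is a free extension with base $A$ and fiber $B$ (via $\iota,\pi$) if and only if $(I_B)^2\circ G=0$.
   Context: $Q_R=\mathsf{k}_{DP}[X_1,\dots,X_r]$, $Q_S=\mathsf{k}_{DP}[X_1,\dots,X_r,T]$ divided power rings with contraction action ($x_i^s\circ X_i^{[k]}=X_i^{[k-s]}$ for $k\ge s$, else $0$; likewise $t$ on $T$); $\operatorname{Ann}$ denotes annihilator under this action. $\iota:A\to C$ is induced by $\mathsf{k}[t]\subset S$, $\pi:C\to B$ by $t\mapsto0$, $x_i\mapsto x_i$. $C$ is a free extension with base $A$ and fiber $B$ if $\iota$ makes $C$ a free $A$-module and $\pi$ is surjective with $\ker\pi=(\iota(A_+))C$. *)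

(* Defs.v *)
From HB Require Import structures.
From mathcomp Require Import all_boot all_order all_algebra.
Set Implicit Arguments. Unset Strict Implicit. Unset Printing Implicit Defensive.
Import GRing.Theory.
Local Open Scope ring_scope.

Definition mono (r : nat) := {ffun 'I_r -> nat}.
Definition madd r (m1 m2 : mono r) : mono r := [ffun i => (m1 i + m2 i)%N].
Definition mdeg r (m : mono r) : nat := (\sum_i m i)%N.
Definition m0 r : mono r := [ffun => 0%N].

Section Enc.
Variable k : fieldType.
Variable r : nat.

(* Q_R: an element is given by its coefficient function  m |-> coeff of X^[m].
   (Homogeneous elements automatically have finite support.) *)
Definition QR := mono r -> k.
(* Q_S: coefficient function (m, e) |-> coeff of X^[m] T^[e]. *)
Definition QS := mono r -> nat -> k.

Definition homogR (d : nat) (F : QR) : Prop :=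
  forall m, mdeg m <> d -> F m = 0.

(* Elements of R: formal finite k-linear combinations of monomials. *)
Definition Rpoly := seq (mono r * k).
(* Elements of S = R[t]: formal combinations of monomials x^m t^e. *)
Definition Spoly := seq ((mono r * nat) * k).

Definition addR (p q : Rpoly) : Rpoly := p ++ q.
Definition oppR (p : Rpoly) : Rpoly := [seq (u.1, - u.2) | u <- p].
Definition mulR (p q : Rpoly) : Rpoly :=
  [seq (madd u.1 v.1, u.2 * v.2) | u <- p, v <- q].
Definition addS (p q : Spoly) : Spoly := p ++ q.
Definition oppS (p : Spoly) : Spoly := [seq (u.1, - u.2) | u <- p].
Definition mulS (p q : Spoly) : Spoly :=
  [seq ((madd u.1.1 v.1.1, (u.1.2 + v.1.2)%N), u.2 * v.2) | u <- p, v <- q].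
Definition sumS (ps : seq Spoly) : Spoly := flatten ps.

(* Contraction action: x^a o X^[b] = X^[b-a] if a <= b, else 0; hence the
   coefficient of X^[m] in x^a o F is the coefficient of X^[m+a] in F. *)
Definition contrR (p : Rpoly) (F : QR) : QR :=
  fun m => \sum_(u <- p) u.2 * F (madd m u.1).
Definition contrS (p : Spoly) (F : QS) : QS :=
  fun m e => \sum_(u <- p) u.2 * F (madd m u.1.1) (e + u.1.2)%N.

Definition AnnR (F : QR) (p : Rpoly) : Prop := forall m, contrR p F m = 0.
Definition AnnS (F : QS) (p : Spoly) : Prop := forall m e, contrS p F m e = 0.

Definition sqIdeal (I : Rpoly -> Prop) (h : Rpoly) : Prop :=
  exists fg : seq (Rpoly * Rpoly),
    (forall u, u \in fg -> I u.1 /\ I u.2) /\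
    h = foldr (fun u acc => addR (mulR u.1 u.2) acc) [::] fg.

(* iota : A = k[t]/(t^n) -> C = S/Ann_S(F), induced by k[t] \subset S;
   an element of A is represented by a polynomial a : {poly k}. *)
Definition iotaS (a : {poly k}) : Spoly :=
  [seq ((m0 r, i), a`_i) | i <- iota 0 (size a)].

(* pi : C -> B = R/I_B, t |-> 0, x_i |-> x_i. *)
Definition piS (s : Spoly) : Rpoly :=
  [seq (u.1.1, u.2) | u <- s & u.1.2 == 0%N].

(* C = S/Ann_S(F) is a free extension with base A = k[t]/(t^n) and fiber
   B = R/Ann_R(FB), via iota and pi:
   (1) C is a free A-module via iota: there is a basis c_1..c_m of C such that
       every element of C is an A-combination sum_j iota(a_j) c_j, and such a
       combination vanishes in C only if every a_j vanishes in A (t^n | a_j);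
   (2) pi is surjective;
   (3) ker pi = (iota(A_+)) C, A_+ = (t) the maximal ideal of A. *)
Definition free_extension (n : nat) (F : QS) (FB : QR) : Prop :=
  (exists c : seq Spoly,
     (forall s : Spoly, exists a : seq {poly k},
        size a = size c /\
        AnnS F (addS s (oppS (sumS [seq mulS (iotaS p.1) p.2 | p <- zip a c]))))
     /\
     (forall a : seq {poly k}, size a = size c ->
        AnnS F (sumS [seq mulS (iotaS p.1) p.2 | p <- zip a c]) ->
        forall p, p \in a -> ('X^n %| p)))
  /\
  (forall b : Rpoly, exists s : Spoly, AnnR FB (addR (piS s) (oppR b)))
  /\
  (forall s : Spoly,
     AnnR FB (piS s) <->
     exists ac : seq ({poly k} * Spoly),
       (forall u, u \in ac -> u.1`_0 = 0) /\
       AnnS F (addS s (oppS (sumS [seq mulS (iotaS u.1) u.2 | u <- ac])))).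

End Enc.

(* Main.v *)
Require Import Defs.
From HB Require Import structures.
From mathcomp Require Import all_boot all_order all_algebra.
From mathcomp Require Import zify.
Set Implicit Arguments. Unset Strict Implicit. Unset Printing Implicit Defensive.
Import GRing.Theory.
Local Open Scope ring_scope.

Section Gen.
Variable k : fieldType.
Variable r : nat.
Implicit Types (F : QR k r) (p q : Rpoly k r) (s : Spoly k r).

Lemma maddC (a b : mono r) : madd a b = madd b a.
Proof. by apply/ffunP=> i; rewrite !ffunE addnC. Qed.
Lemma maddA (a b c : mono r) : madd a (madd b c) = madd (madd a b) c.
Proof. by apply/ffunP=> i; rewrite !ffunE addnA. Qed.
Lemma madd0 (a : mono r) : madd a (m0 r) = a.
Proof. by apply/ffunP=> i; rewrite !ffunE addn0. Qed.
Lemma madd0l (a : mono r) : madd (m0 r) a = a.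
Proof. by apply/ffunP=> i; rewrite !ffunE add0n. Qed.
Lemma mdeg_madd (a b : mono r) : mdeg (madd a b) = (mdeg a + mdeg b)%N.
Proof. by rewrite /mdeg -big_split /=; apply: eq_bigr => i _; rewrite ffunE. Qed.

Lemma contrR_cat p q F m : contrR (addR p q) F m = contrR p F m + contrR q F m.
Proof. by rewrite /contrR /addR big_cat. Qed.
Lemma contrR_opp p F m : contrR (oppR p) F m = - contrR p F m.
Proof. by rewrite /contrR /oppR big_map -sumrN; apply: eq_bigr => u _; rewrite mulNr. Qed.
Lemma contrR_nil F m : contrR [::] F m = 0.
Proof. by rewrite /contrR big_nil. Qed.
Lemma contrR_ext p F F' : (forall m, F m = F' m) -> forall m, contrR p F m = contrR p F' m.
Proof. by move=> e m; apply: eq_bigr => u _; rewrite e. Qed.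
Lemma contrR_mul p q F m : contrR (mulR p q) F m = contrR p (contrR q F) m.
Proof.
rewrite /contrR /mulR big_allpairs_dep /=; apply: eq_bigr => u _.
rewrite mulr_sumr; apply: eq_bigr => v _.
by rewrite mulrA maddA.
Qed.
Lemma contrR_mulC p q F m : contrR (mulR p q) F m = contrR q (contrR p F) m.
Proof.
rewrite /contrR /mulR big_allpairs_dep /= exchange_big; apply: eq_bigr => v _.
rewrite mulr_sumr; apply: eq_bigr => u _.
rewrite mulrA [v.2 * u.2]mulrC; congr (_ * F _); apply/ffunP => i; rewrite !ffunE.
by rewrite addnAC addnA.
Qed.
Lemma contrR_zero p F : (forall m, F m = 0) -> forall m, contrR p F m = 0.
Proof. by move=> e m; apply: big1 => u _; rewrite e mulr0. Qed.

Definition CR (i : nat) s F m := \sum_(u <- s | u.1.2 == i) u.2 * F (madd m u.1.1).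

Lemma CR_cat i s s' F m : CR i (addS s s') F m = CR i s F m + CR i s' F m.
Proof. by rewrite /CR /addS big_cat. Qed.
Lemma CR_opp i s F m : CR i (oppS s) F m = - CR i s F m.
Proof. by rewrite /CR /oppS big_map -sumrN; apply: eq_bigr => u _; rewrite mulNr. Qed.
Lemma CR_sum i (ss : seq (Spoly k r)) F m : CR i (sumS ss) F m = \sum_(s <- ss) CR i s F m.
Proof. by rewrite /CR /sumS big_flatten. Qed.
Lemma CR_pi s F m : contrR (piS s) F m = CR 0 s F m.
Proof. by rewrite /contrR /piS big_map big_filter. Qed.

Definition compS (i : nat) s : Rpoly k r := [seq (u.1.1, u.2) | u <- s & u.1.2 == i].
Lemma CR_comp i s F m : contrR (compS i s) F m = CR i s F m.
Proof. by rewrite /contrR /compS big_map big_filter. Qed.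

Definition liftR p : Spoly k r := [seq ((u.1, 0%N), u.2) | u <- p].
Lemma CR_lift i p F m : CR i (liftR p) F m = if i == 0%N then contrR p F m else 0.
Proof.
rewrite /CR /liftR big_map /=; case: (i =P 0%N) => [->|/eqP ne].
  by apply: eq_bigl.
by apply: big1 => u; rewrite eq_sym (negbTE ne).
Qed.
Lemma pi_lift p : piS (liftR p) = p.
Proof.
rewrite /piS /liftR filter_map /=.
have -> : [seq u <- p | preim (fun u => ((u.1, 0%N), u.2)) (fun u : mono r * nat * k => u.1.2 == 0%N) u] = p.
  by apply/all_filterP/allP.
by rewrite -map_comp map_id_in // => -[].
Qed.

Lemma CR_iota_lift i (a : {poly k}) p F m :
  CR i (mulS (iotaS r a) (liftR p)) F m = a`_i * contrR p F m.
Proof.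
rewrite /CR /mulS /iotaS /liftR big_mkcond big_allpairs_dep /= big_map.
under eq_bigr => j _ do rewrite big_map /= addn0.
case: (ltnP i (size a)) => hi.
  rewrite (bigD1_seq i) ?mem_iota ?iota_uniq //= [X in _ + X]big1_seq ?addr0.
    rewrite /contrR mulr_sumr; apply: eq_bigr => v _.
    by rewrite eqxx madd0l mulrA.
  by move=> j /andP[ne _]; apply: big1 => v _; rewrite (negbTE ne).
rewrite nth_default // mul0r big1_seq // => j /andP[_]; rewrite mem_iota => /andP[_ hj].
apply: big1 => v _; case: eqP => // ej; move: hj; rewrite ej add0n ; by rewrite ltnNge hi.
Qed.

Lemma CR0_iota (a : {poly k}) s F m :
  CR 0 (mulS (iotaS r a) s) F m = a`_0 * CR 0 s F m.
Proof.
rewrite /CR /mulS /iotaS big_mkcond big_allpairs_dep /= big_map.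
case: (ltnP 0 (size a)) => hi.
  rewrite (bigD1_seq 0%N) ?mem_iota ?iota_uniq //= [X in _ + X]big1_seq ?addr0.
    rewrite mulr_sumr [in RHS]big_mkcond; apply: eq_bigr => v _ /=.
    rewrite add0n; case: ifP => // _.
    by rewrite madd0l mulrA.
  move=> j /andP[ne _]; apply: big1 => v _ /=; case: ifP => //; rewrite addn_eq0 => /andP[/eqP ej _].
  by move: ne; rewrite ej.
rewrite nth_default // mul0r big1_seq // => j /andP[_]; rewrite mem_iota => /andP[_ hj].
apply: big1 => v _ /=; case: ifP => //; rewrite addn_eq0 => /andP[/eqP ej _]; move: hj; rewrite ej add0n.
by move: hi; rewrite leqn0 => /eqP ->.
Qed.

End Gen.
Section Ann.
Variable k : fieldType.
Variables r n : nat.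
Variables FB G : QR k r.
Hypothesis hn : (2 <= n)%N.
Definition Fs : QS k r := fun m e => (if e == n.-1 then FB m else 0) + (if e == 0%N then G m else 0).

Lemma contrS_F (s : Spoly k r) m e : contrS s Fs m e =
  (\sum_(u <- s | (e + u.1.2 == n.-1)%N) u.2 * FB (madd m u.1.1)) +
  \sum_(u <- s | (e + u.1.2 == 0)%N) u.2 * G (madd m u.1.1).
Proof.
rewrite /contrS /Fs [X in _ = X + _]big_mkcond [X in _ = _ + X]big_mkcond -big_split /=.
apply: eq_bigr => u _ /=.
by rewrite mulrDr; case: ifP => _; case: ifP => _; rewrite ?mulr0.
Qed.

Lemma AnnS_char (s : Spoly k r) : AnnS Fs s <->
  (forall i, (i < n.-1)%N -> forall m, CR i s FB m = 0) /\
  (forall m, CR n.-1 s FB m + CR 0 s G m = 0).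
Proof.
have n1 : (0 < n.-1)%N by case: n hn => [|[|]].
split.
  move=> h; split.
    move=> i hi m; move: (h m (n.-1 - i)%N); rewrite contrS_F.
    rewrite [X in _ + X]big1 ?addr0; last first.
      by move=> u; rewrite addn_eq0 subn_eq0 leqNgt hi.
    move=> e; apply: etrans e; rewrite /CR; apply: eq_bigl => u.
    apply/eqP/eqP; lia.
  move=> m; move: (h m 0%N); rewrite contrS_F /CR => e; apply: etrans e.
  by congr (_ + _); apply: eq_bigl => u; rewrite add0n.
move=> [h1 h2] m e.
rewrite contrS_F.
case: (ltnP n.-1 e) => he.
  rewrite !big1 ?addr0 // => u.
    by move/eqP => ee; lia.
  by move/eqP => ee; lia.
case: (posnP e) => [->|e0].
  apply: etrans (h2 m).
  by rewrite /CR; congr (_ + _); apply: eq_bigl => u; rewrite add0n.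
rewrite [X in _ + X]big1 ?addr0; last by move=> u; rewrite addn_eq0 -(prednK e0).
apply: etrans (h1 (n.-1 - e)%N _ m); last by rewrite ltn_subrL n1 e0.
rewrite /CR; apply: eq_bigl => u.
apply/eqP/eqP; lia.
Qed.
End Ann.
Section Fwd.
Variable k : fieldType.
Variables r n : nat.
Variables FB G : QR k r.
Hypothesis hn : (2 <= n)%N.

Lemma sq_ann :
  (forall g, AnnR FB g -> exists f, forall m, contrR g G m = contrR f FB m) ->
  forall h, sqIdeal (AnnR FB) h -> AnnR G h.
Proof.
move=> ha h [fg [hfg ->]] m.
elim: fg hfg m => [|[p q] fg IH] hfg m /=; first by rewrite contrR_nil.
rewrite contrR_cat IH; last by move=> u hu; apply: hfg; rewrite inE hu orbT.
have [hp hq] := hfg (p, q) (mem_head _ _).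
have [f hf] := ha q hq.
rewrite addr0 contrR_mul (contrR_ext p hf) -contrR_mul contrR_mulC.
by apply: contrR_zero.
Qed.

Lemma forward : free_extension n (Fs n FB G) FB ->
  forall h, sqIdeal (AnnR FB) h -> AnnR G h.
Proof.
case=> _ [_ h3]; apply: sq_ann => g hg.
have [|ac [hac hJ]] := (h3 (liftR g)).1; first by rewrite pi_lift.
set w := sumS _ in hJ.
have [_ h2] := (AnnS_char FB G hn _).1 hJ.
exists (oppR (compS n.-1 (addS (liftR g) (oppS w)))) => m.
rewrite contrR_opp CR_comp; apply/eqP; rewrite -addr_eq0 addrC; apply/eqP.
apply: etrans (h2 m); congr (_ + _).
rewrite CR_cat CR_opp CR_lift /= /w CR_sum big_map big1_seq ?oppr0 ?addr0 // => u /andP[_ hu].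
by rewrite CR0_iota hac // mul0r.
Qed.
End Fwd.
Section Mat.
Variable k : fieldType.
Variables r jB : nat.
Variable FB : QR k r.
Hypothesis hFB : homogR jB FB.

Definition TT := {ffun 'I_r -> 'I_jB.+1}.
Definition KK := #|TT|.
Definition ev (x : 'I_KK) : TT := enum_val x.
Definition emb (t : TT) : mono r := [ffun i => nat_of_ord (t i)].
Definition small (m : mono r) := [forall i, (m i <= jB)%N].
Definition eme (x : 'I_KK) := emb (ev x).

Lemma emb_inj : injective emb.
Proof.
move=> t1 t2 e; apply/ffunP => i; apply/val_inj.
by have := congr1 (fun f : mono r => f i) e; rewrite !ffunE.
Qed.
Lemma eme_inj : injective eme.
Proof. by move=> x y /emb_inj /(congr1 enum_rank); rewrite /ev !enum_valK. Qed.

Lemma small_eme m : small m -> exists y, m = eme y.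
Proof.
move=> /forallP hs; exists (enum_rank ([ffun i => inord (m i)] : TT)).
rewrite /eme /ev enum_rankK; apply/ffunP => i; rewrite !ffunE inordK //.
by rewrite ltnS hs.
Qed.

Lemma big_notsmall m a : ~~ small m -> FB (madd m a) = 0.
Proof.
move=> /forallPn [i hi]; apply: hFB; rewrite mdeg_madd => e.
have : (m i <= mdeg m)%N.
  by rewrite /mdeg (bigD1 i) //= leq_addr.
move: hi; rewrite -ltnNge; lia.
Qed.

Lemma contr_notsmall p m : ~~ small m -> contrR p FB m = 0.
Proof. by move=> hm; rewrite /contrR big1 // => u _; rewrite big_notsmall // mulr0. Qed.

Definition PP : 'M[k]_KK := \matrix_(x, y) FB (madd (eme x) (eme y)).
Definition vecR (p : Rpoly k r) : 'rV[k]_KK := \row_x \sum_(u <- p | u.1 == eme x) u.2.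
Definition polyOf (v : 'rV[k]_KK) : Rpoly k r := [seq (eme x, v 0 x) | x <- enum 'I_KK].

Lemma PP_sym : PP^T = PP.
Proof. by apply/matrixP => x y; rewrite !mxE maddC. Qed.

Lemma contr_vec p y : contrR p FB (eme y) = (vecR p *m PP) 0 y.
Proof.
rewrite !mxE /contrR.
under [RHS]eq_bigr => x _ do rewrite !mxE big_distrl /= big_mkcond /=.
rewrite exchange_big /=; apply: eq_bigr => u _.
case hs: (small u.1).
  have [z ez] := small_eme hs.
  rewrite (bigD1 z) //= ez eqxx big1 ?addr0; first by rewrite maddC.
  by move=> x nx; case: eqP => // /eme_inj ex; move: nx; rewrite ex eqxx.
rewrite maddC big_notsmall ?hs // mulr0; apply/esym/big1 => x _.
by case: eqP => // <-; rewrite big_notsmall ?mulr0 ?hs.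
Qed.

Lemma contr_polyOf v F m : contrR (polyOf v) F m = \sum_x v 0 x * F (madd m (eme x)).
Proof. by rewrite /contrR /polyOf big_map big_enum. Qed.

Lemma contr_polyOfP v y : contrR (polyOf v) FB (eme y) = (v *m PP) 0 y.
Proof. by rewrite contr_polyOf mxE; apply: eq_bigr => x _; rewrite mxE maddC. Qed.

Lemma polyOf_lin b (al : 'rV[k]_b) (Q : 'M[k]_(b, KK)) F m :
  contrR (polyOf (al *m Q)) F m = \sum_j al 0 j * contrR (polyOf (row j Q)) F m.
Proof.
rewrite contr_polyOf.
under eq_bigr => x _ do rewrite mxE big_distrl.
rewrite exchange_big /=; apply: eq_bigr => j _.
rewrite contr_polyOf mulr_sumr; apply: eq_bigr => x _.
by rewrite !mxE mulrA.
Qed.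

Lemma ext_small (H1 H2 : QR k r) : (forall m, ~~ small m -> H1 m = 0) ->
  (forall m, ~~ small m -> H2 m = 0) -> (forall y, H1 (eme y) = H2 (eme y)) ->
  forall m, H1 m = H2 m.
Proof.
move=> h1 h2 e m; case hs: (small m).
  by have [y ->] := small_eme hs; apply: e.
by rewrite h1 ?h2 ?hs.
Qed.

Section Basis.
Variable b : nat.
Variable Q : 'M[k]_(b, KK).
Hypothesis hfree : row_free (Q *m PP).
Hypothesis hspan : (PP <= Q *m PP)%MS.
Definition cb (j : 'I_b) := polyOf (row j Q).

Lemma span_B p : exists al : 'rV[k]_b,
  forall m, contrR p FB m = \sum_j al 0 j * contrR (cb j) FB m.
Proof.
have : (vecR p *m PP <= Q *m PP)%MS by apply: submx_trans hspan; apply: submxMl.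
case/submxP => al e; exists al.
apply: ext_small => [m hm|m hm|y]; first by rewrite contr_notsmall.
  by rewrite big1 // => j _; rewrite contr_notsmall // mulr0.
by rewrite contr_vec e mulmxA -contr_polyOfP polyOf_lin.
Qed.

Lemma indep_B (al : 'rV[k]_b) :
  (forall m, \sum_j al 0 j * contrR (cb j) FB m = 0) -> al = 0.
Proof.
move=> h; apply: (row_free_inj hfree); rewrite mul0mx.
apply/rowP => y; rewrite mulmxA -contr_polyOfP polyOf_lin h mxE //.
Qed.
End Basis.

Lemma basis_exists : exists b (Q : 'M[k]_(b, KK)), row_free (Q *m PP) /\ (PP <= Q *m PP)%MS.
Proof.
have : (row_base PP <= PP)%MS by rewrite eq_row_base.
case/submxP => Q e; exists (\rank PP), Q.
by rewrite -e row_base_free eq_row_base.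
Qed.

Lemma macaulay (H : QR k r) : (forall p, AnnR FB p -> AnnR H p) ->
  exists f, forall m, H m = contrR f FB m.
Proof.
move=> hH.
have Hz : forall m, ~~ small m -> H m = 0.
  move=> m hm; have := hH [:: (m, 1)] _ (m0 r).
  rewrite /contrR big_cons big_nil mul1r addr0 madd0l => -> //.
  by move=> m'; rewrite /contrR big_cons big_nil mul1r addr0 maddC big_notsmall.
pose h : 'rV[k]_KK := \row_x H (eme x).
have hker : forall u : 'rV[k]_KK, u *m PP = 0 -> u *m h^T = 0.
  move=> u hu; apply/rowP => z; rewrite ord1.
  have hann : AnnR FB (polyOf u).
    apply: ext_small => [m hm|m hm|y]; first by rewrite contr_notsmall.
      by [].
    by rewrite contr_polyOfP hu mxE.
  have e := hH (polyOf u) hann (m0 r); rewrite contr_polyOf in e.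
  by rewrite !mxE -[RHS]e; apply: eq_bigr => x _; rewrite !mxE madd0l.
have : (h <= PP^T)%MS.
  rewrite submxE; apply/eqP.
  have e1 : (cokermx PP^T)^T *m PP = 0.
    by rewrite -{2}[PP]trmxK -trmx_mul mulmx_coker trmx0.
  have e2 : (cokermx PP^T)^T *m h^T = 0.
    apply/row_matrixP => i; rewrite row0 row_mul hker // -row_mul e1 row0 //.
  by rewrite -[LHS]trmxK trmx_mul e2 trmx0.
rewrite PP_sym; case/submxP => q eq.
exists (polyOf q); apply: ext_small => [m hm|m hm|y]; first exact: Hz.
  by rewrite contr_notsmall.
by rewrite contr_polyOfP -eq mxE.
Qed.
End Mat.
Lemma mem_zip1 (A B : eqType) (a : seq A) (l : seq B) u : u \in zip a l -> u.1 \in a.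
Proof.
elim: a l => [|x a IH] [|y l] //=; rewrite inE => /orP[/eqP -> /=|h].
  by rewrite eqxx.
by rewrite (IH l h) orbT.
Qed.

Lemma zip_sum (k : fieldType) (A B : Type) (a : seq A) (l : seq B) (f : A -> B -> k) x0 y0 :
  size a = size l ->
  \sum_(p <- zip a l) f p.1 p.2 = \sum_(0 <= j < size l) f (nth x0 a j) (nth y0 l j).
Proof.
elim: l a => [|y l IH] a.
  by case: a => // _; rewrite big_nil big_geq.
case: a => [//|x a] /= [e].
rewrite big_cons big_nat_recl //= (IH a e); congr (_ + _).
Qed.

Lemma choice_fin (T : Type) (P : nat -> T -> Prop) N :
  (forall i, exists x, P i x) -> exists f : nat -> T, forall i, (i < N)%N -> P i (f i).
Proof.
move=> h; elim: N => [|N [f hf]]; first by have [x _] := h 0%N; exists (fun _ => x).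
have [x hx] := h N; exists (fun i => if i == N then x else f i) => i hi.
case: eqP => [->//|ne]; apply: hf; move: hi ne; rewrite ltnS leq_eqVlt => /orP[/eqP->//|//].
Qed.

Section Bwd.
Variable k : fieldType.
Variables r n jB : nat.
Variables FB G : QR k r.
Hypothesis hn : (2 <= n)%N.
Hypothesis hFB : homogR jB FB.
Hypothesis hsq : forall h, sqIdeal (AnnR FB) h -> AnnR G h.

Lemma hA g : AnnR FB g -> exists f, forall m, contrR g G m = contrR f FB m.
Proof.
move=> hg; apply: (macaulay hFB (H := contrR g G)) => p hp m.
have hs : sqIdeal (AnnR FB) (addR (mulR p g) [::]).
  by exists [:: (p, g)]; split => // u; rewrite inE => /eqP -> /=.
have := hsq hs m.
by rewrite contrR_cat contrR_nil addr0 contrR_mul.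
Qed.

Variable b : nat.
Variable Q : 'M[k]_(b, KK r jB).
Hypothesis hfree : row_free (Q *m PP jB FB).
Hypothesis hspan : (PP jB FB <= Q *m PP jB FB)%MS.
Notation cb := (cb Q).
Definition cS : seq (Spoly k r) := [seq liftR (cb j) | j <- enum 'I_b].

Lemma size_cS : size cS = b.
Proof. by rewrite size_map size_enum_ord. Qed.

Lemma CR_comb (a : seq {poly k}) i F m : size a = b ->
  CR i (sumS [seq mulS (iotaS r p.1) p.2 | p <- zip a cS]) F m =
  \sum_(j < b) (nth 0 a j)`_i * contrR (cb j) F m.
Proof.
move=> sa; rewrite CR_sum big_map.
rewrite (zip_sum (fun x y => CR i (mulS (iotaS r x) y) F m) 0 [::]); last by rewrite size_cS.
rewrite size_cS big_mkord; apply: eq_bigr => j _.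
by rewrite (nth_map j) ?size_enum_ord // nth_ord_enum CR_iota_lift.
Qed.

Lemma indep_coef (a : seq {poly k}) i : size a = b ->
  (forall m, \sum_(j < b) (nth 0 a j)`_i * contrR (cb j) FB m = 0) ->
  forall j : 'I_b, (nth 0 a j)`_i = 0.
Proof.
move=> sa h j.
have hh : forall m, \sum_j0 (\row_j1 (nth 0 a j1)`_i) 0 j0 * contrR (cb j0) FB m = 0.
  by move=> m; apply: (etrans _ (h m)); apply: eq_bigr => j' _; rewrite mxE.
have e := indep_B hfree hh.
by have := congr1 (fun M : 'rV[k]_b => M 0 j) e; rewrite !mxE.
Qed.

Lemma all_coef (a : seq {poly k}) : size a = b ->
  (forall j : 'I_b, forall i, (i < n)%N -> (nth 0 a j)`_i = 0) ->
  forall p, p \in a -> 'X^n %| p.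
Proof.
move=> sa h p pa.
have hi : (index p a < b)%N by rewrite -sa index_mem.
have := h (Ordinal hi); rewrite /= nth_index // => hc.
have ht : take_poly n p = 0.
  by apply/polyP => i; rewrite coef_take_poly coef0; case: ifP => // /hc.
by rewrite -(poly_take_drop n p) ht add0r dvdp_mull.
Qed.

Lemma spanning (s : Spoly k r) : exists a : seq {poly k}, size a = b /\
  AnnS (Fs n FB G) (addS s (oppS (sumS [seq mulS (iotaS r p.1) p.2 | p <- zip a cS]))).
Proof.
have [al hal] := choice_fin n (fun i => span_B hFB hspan (compS i s)).
have n1 : (0 < n.-1)%N by case: n hn => [|[|]].
have nn : (n.-1 < n)%N by case: n hn => [|[|]].
have n0 : (0 < n)%N by case: n hn.
pose D := addR (compS 0 s) (oppR (polyOf (al 0%N *m Q))).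
have hD : AnnR FB D.
  move=> m; rewrite contrR_cat contrR_opp (hal 0%N n0) polyOf_lin subrr //.
have [f hf] := hA hD.
have [be hbe] := span_B hFB hspan f.
pose aj (j : 'I_b) := \poly_(i < n) (al i 0 j) + (be 0 j)%:P * 'X^(n.-1).
have caj j i : (aj j)`_i = (if (i < n)%N then al i 0 j else 0) + (if i == n.-1 then be 0 j else 0).
  by rewrite coefD coef_poly coefCM coefXn mulr_natr mulrb.
pose A : seq {poly k} := [seq aj j | j <- enum 'I_b].
have sA : size A = b by rewrite size_map size_enum_ord.
exists A; split => //.
have nthA (j : 'I_b) : nth 0 A j = aj j.
  by rewrite (nth_map j) ?size_enum_ord // nth_ord_enum.
have cA (j : 'I_b) i : (nth 0 A j)`_i = (aj j)`_i by rewrite nthA.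
clearbody A.
apply/AnnS_char => //; split.
  move=> i hi m; rewrite CR_cat CR_opp (CR_comb _ _ _ sA).
  rewrite -CR_comp (hal i (ltn_trans hi nn)); apply/eqP; rewrite subr_eq0; apply/eqP.
  apply: eq_bigr => j _; rewrite (cA j i) caj (ltn_trans hi nn) (ltn_eqF hi) addr0 //.
move=> m; rewrite !CR_cat !CR_opp !(CR_comb _ _ _ sA).
rewrite -CR_comp (hal n.-1 nn).
have e1 : \sum_(j < b) (nth 0 A j)`_n.-1 * contrR (cb j) FB m =
    \sum_(j < b) al n.-1 0 j * contrR (cb j) FB m + \sum_(j < b) be 0 j * contrR (cb j) FB m.
  rewrite -big_split; apply: eq_bigr => j _; rewrite (cA j n.-1) caj nn eqxx mulrDl //.
have e2 : \sum_(j < b) (nth 0 A j)`_0 * contrR (cb j) G m =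
    \sum_(j < b) al 0%N 0 j * contrR (cb j) G m.
  apply: eq_bigr => j _; rewrite (cA j 0%N) caj n0 (ltn_eqF n1) addr0 //.
rewrite e1 e2.
have eD := hf m; rewrite contrR_cat contrR_opp polyOf_lin CR_comp in eD.
rewrite eD hbe.
set X := \sum_(j < b) _; set Y := \sum_(j < b) _.
by rewrite opprD addrA subrr add0r addNr.
Qed.

Lemma backward : free_extension n (Fs n FB G) FB.
Proof.
have n1 : (0 < n.-1)%N by case: n hn => [|[|]].
have nn : (n.-1 < n)%N by case: n hn => [|[|]].
split; [|split].
- exists cS; split; first by move=> s; have [a [sa ha]] := spanning s; exists a; rewrite size_cS.
  move=> a; rewrite size_cS => sa /(AnnS_char FB G hn) [h1 h2].
  have hlow i : (i < n.-1)%N -> forall j : 'I_b, (nth 0 a j)`_i = 0.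
    move=> hi; apply: indep_coef => // m; apply: (etrans _ (h1 i hi m)); rewrite CR_comb //.
  apply: all_coef => // j i hi.
  case: (ltnP i n.-1) => hi'; first exact: hlow.
  have -> : i = n.-1 by lia.
  apply: indep_coef => // m'; have e := h2 m'; rewrite !CR_comb // in e.
  have z : \sum_(j < b) (nth 0 a j)`_0 * contrR (cb j) G m' = 0.
    by apply: big1 => j' _; rewrite hlow // mul0r.
  by rewrite z addr0 in e.
- move=> q; exists (liftR q) => m; rewrite pi_lift contrR_cat contrR_opp subrr //.
- move=> s; split.
    move=> hpi; have [a [sa hJ]] := spanning s.
    exists (zip a cS); split => //.
    have [h1 _] := (AnnS_char FB G hn _).1 hJ.
    have h0 : forall j : 'I_b, (nth 0 a j)`_0 = 0.
      apply: indep_coef => // m; have := h1 0%N n1 m.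
      rewrite CR_cat CR_opp CR_comb // -CR_pi hpi sub0r => /eqP; rewrite oppr_eq0 => /eqP //.
    move=> u /mem_zip1 ua.
    have hi : (index u.1 a < b)%N by rewrite -sa index_mem.
    by have := h0 (Ordinal hi); rewrite /= nth_index.
  move=> [ac [hac hJ]] m.
  have [h1 _] := (AnnS_char FB G hn _).1 hJ.
  have := h1 0%N n1 m; rewrite CR_pi CR_cat CR_opp CR_sum big_map big1_seq ?oppr0 ?addr0 //.
  by move=> u /andP[_ hu]; rewrite CR0_iota hac // mul0r.
Qed.
End Bwd.

Unset Implicit Arguments.
Theorem corollary2p5 (k : fieldType) (r n jB : nat) (FB G : QR k r) :
  (2 <= n)%N ->
  homogR jB FB ->
  homogR (jB + n - 1) G ->
  free_extension n
    (fun m e => (if e == n.-1 then FB m else 0) + (if e == 0%N then G m else 0))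
    FB
  <-> (forall h, sqIdeal (AnnR FB) h -> AnnR G h).
Proof.
move=> hn hFB _; split; first exact: (forward hn).
move=> hsq; have [b [Q [hfree hspan]]] := basis_exists jB FB.
exact: (backward hn hFB hsq hfree hspan).
Qed.
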